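(* Let $N\ge 1$ be an integer, let $\mathbf{h}_{s},\mathbf{h}_{b}\in\mathbb{C}^{N\times 1}$ be nonzero vectors, and set $\mathbf{H}_{s}=\mathbf{h}_{s}\mathbf{h}_{s}^H$ and $\mathbf{H}_{b}=\mathbf{h}_{b}\mathbf{h}_{b}^H$. Let $N^{no}>0$, $\Gamma_{s,0}>0$ and $\Gamma_{b,0}>0$ be real constants. Consider the semidefinite program $$\min_{\mathbf{W}_{s},\mathbf{W}_{b}} \ \operatorname{Tr}(\mathbf{W}_{s})+\operatorname{Tr}(\mathbf{W}_{b})$$ over $N\times N$ Hermitian matrices $\mathbf{W}_{s},\mathbf{W}_{b}$, subject to $$\operatorname{Tr}(\mathbf{H}_{s}\mathbf{W}_{s})\ge N^{no}\Gamma_{s,0},$$ $$\operatorname{Tr}(\mathbf{H}_{s}\mathbf{W}_{b})\ge \Gamma_{b,0}\operatorname{Tr}(\mathbf{H}_{s}\mathbf{W}_{s})+N^{no}\Gamma_{b,0},$$ $$\operatorname{Tr}(\mathbf{H}_{b}\mathbf{W}_{b})\ge \Gamma_{b,0}\operatorname{Tr}(\mathbf{H}_{b}\mathbf{W}_{s})+N^{no}\Gamma_{b,0},$$ $$\mathbf{W}_{s}\succeq 0,\qquad \mathbf{W}_{b}\succeq 0.$$ Then this problem has an optimal solution $(\mathbf{W}_{s}^{*},\mathbf{W}_{b}^{*})$ with $\operatorname{rank}(\mathbf{W}_{s}^{*})=\operatorname{rank}(\mathbf{W}_{b}^{*})=1$.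
   Context: This is the semidefinite relaxation (rank-one constraints dropped) of the per-cluster NOMA-period power minimization in a downlink multi-antenna system: the base station has $N$ antennas and serves, in a cluster, a semantic user with channel $\mathbf{h}_{s}$ and a bit-based user with channel $\mathbf{h}_{b}$ using beamformers $\mathbf{w}_s,\mathbf{w}_b$, with $\mathbf{W}_s=\mathbf{w}_s\mathbf{w}_s^H$, $\mathbf{W}_b=\mathbf{w}_b\mathbf{w}_b^H$. Here $N^{no}=B^{no}N_0$ is the noise power (bandwidth times noise power spectral density), $\Gamma_{s,0}$ is the SNR threshold required by the semantic user, and $\Gamma_{b,0}=2^{R_0/B^{no}}-1$ is the SINR threshold of the bit-based user. $\mathbf{A}\succeq 0$ means $\mathbf{A}$ is positive semidefinite. *)

(* Defs.v *)
From HB Require Import structures.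
From mathcomp Require Import all_boot all_order all_algebra.
From mathcomp Require Import reals complex.
Set Implicit Arguments. Unset Strict Implicit. Unset Printing Implicit Defensive.
Import Order.TTheory GRing.Theory Num.Theory.
Local Open Scope ring_scope.

Section SDP.
Variable C : numClosedFieldType.

Definition ctrmx m n (A : 'M[C]_(m, n)) : 'M[C]_(n, m) := (map_mx Num.conj A)^T.

Definition hermmx n (A : 'M[C]_n) : Prop := ctrmx A = A.

Definition psdmx n (A : 'M[C]_n) : Prop :=
  hermmx A /\ forall x : 'cV[C]_n, 0 <= (ctrmx x *m A *m x) 0 0.

(* feasible set of the relaxed per-cluster NOMA power minimization SDP,
   with Hs = hs hs^H, Hb = hb hb^H, Nno = noise power, Gs = Gamma_{s,0},
   Gb = Gamma_{b,0} (all constants embedded as (real) elements of C) *)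
Definition sdp_feasible n (Hs Hb : 'M[C]_n) (Nno Gs Gb : C) (Ws Wb : 'M[C]_n) : Prop :=
  [/\ hermmx Ws, hermmx Wb,
      Nno * Gs <= \tr (Hs *m Ws),
      Gb * \tr (Hs *m Ws) + Nno * Gb <= \tr (Hs *m Wb) &
      [/\ Gb * \tr (Hb *m Ws) + Nno * Gb <= \tr (Hb *m Wb),
      psdmx Ws & psdmx Wb]].

Definition sdp_optimal n (Hs Hb : 'M[C]_n) (Nno Gs Gb : C) (Ws Wb : 'M[C]_n) : Prop :=
  sdp_feasible Hs Hb Nno Gs Gb Ws Wb /\
  forall Vs Vb : 'M[C]_n, sdp_feasible Hs Hb Nno Gs Gb Vs Vb ->
    \tr Ws + \tr Wb <= \tr Vs + \tr Vb.

End SDP.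

(* Main.v *)
Require Import Defs.
From HB Require Import structures.
From mathcomp Require Import all_boot all_order all_algebra.
From mathcomp Require Import reals complex.
From mathcomp Require Import classical_sets boolp topology normedtype derive matrix_normedtype.
From mathcomp Require Import ring lra.
Import Order.TTheory GRing.Theory Num.Theory.
Local Open Scope ring_scope.

Module RealPart.
Import numFieldNormedType.Exports.
Local Open Scope classical_set_scope.
Section RealOpt.
Variable R : realType.

Lemma cD (f g : 'rV[R]_4 -> R) : continuous f -> continuous g -> continuous (fun x => f x + g x).
Proof. move=> cf cg x; exact: (continuousD (cf x) (cg x)). Qed.
Lemma cM (f g : 'rV[R]_4 -> R) : continuous f -> continuous g -> continuous (fun x => f x * g x).
Proof. move=> cf cg x; exact: (continuousM (cf x) (cg x)). Qed.
Lemma cN (f : 'rV[R]_4 -> R) : continuous f -> continuous (fun x => - f x).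
Proof. move=> cf x; exact: (continuousN (cf x)). Qed.
Lemma cK (k : R) : continuous (fun x : 'rV[R]_4 => k).
Proof. move=> x; exact: cst_continuous. Qed.
Lemma cC i : continuous (fun x : 'rV[R]_4 => x ord0 i).
Proof. exact: coord_continuous. Qed.
Lemma cX (f : 'rV[R]_4 -> R) : continuous f -> continuous (fun x => f x ^+ 2).
Proof. move=> cf x. exact: (continuousM (cf x) (cf x)). Qed.

Definition ctn (f : 'rV[R]_4 -> R) := continuous f.
Lemma cD' f g : ctn f -> ctn g -> ctn (fun x => f x + g x). Proof. exact: cD. Qed.
Lemma cM' f g : ctn f -> ctn g -> ctn (fun x => f x * g x). Proof. exact: cM. Qed.
Lemma cN' f : ctn f -> ctn (fun x => - f x). Proof. exact: cN. Qed.
Lemma cX' f : ctn f -> ctn (fun x => f x ^+ 2). Proof. exact: cX. Qed.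
Lemma cK' k : ctn (fun x => k). Proof. exact: cK. Qed.
Lemma cC' i : ctn (fun x => x ord0 i). Proof. exact: cC. Qed.
Ltac cont := match goal with
 | |- ctn (fun x => ?k) => exact: (cK' k)
 | |- ctn (fun x => @fun_of_matrix _ _ _ x _ ?i) => exact: (cC' i)
 | |- ctn (fun x => (@?f x) + (@?g x)) => apply: (@cD' f g); cont
 | |- ctn (fun x => - (@?f x)) => apply: (@cN' f); cont
 | |- ctn (fun x => (@?f x) ^+ 2) => apply: (@cX' f); cont
 | |- ctn (fun x => (@?f x) * (@?g x)) => apply: (@cM' f g); cont
 end.

Definition feasR (p A B a Gs Gb s1 s2 b1 b2 : R) : Prop :=
  [/\ a * Gs <= p * s1 ^+ 2, Gb * (p * s1 ^+ 2) + a * Gb <= p * b1 ^+ 2 &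
      Gb * (A * s1 - B * s2) ^+ 2 + a * Gb <= (A * b1 + B * b2) ^+ 2].

Definition objR (s1 s2 b1 b2 : R) := s1 ^+ 2 + s2 ^+ 2 + b1 ^+ 2 + b2 ^+ 2.

Let i0 : 'I_4 := @Ordinal 4 0 isT.
Let i1 : 'I_4 := @Ordinal 4 1 isT.
Let i2 : 'I_4 := @Ordinal 4 2 isT.
Let i3 : 'I_4 := @Ordinal 4 3 isT.

Lemma real_opt (p A B a Gs Gb : R) : 0 < p -> 0 < a -> 0 < Gs -> 0 < Gb ->
  0 <= A -> 0 <= B -> 0 < A ^+ 2 + B ^+ 2 ->
  exists s1 s2 b1 b2, feasR p A B a Gs Gb s1 s2 b1 b2 /\
    forall t1 t2 d1 d2, feasR p A B a Gs Gb t1 t2 d1 d2 ->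
      objR s1 s2 b1 b2 <= objR t1 t2 d1 d2.
Proof.
move=> p0 a0 Gs0 Gb0 A0 B0 AB0.
pose s1 := Num.sqrt (a * Gs / p).
have s1E : p * s1 ^+ 2 = a * Gs.
  rewrite sqr_sqrtr; last by rewrite divr_ge0 // ?mulr_ge0 // ltW.
  by rewrite mulrC divfK // gt_eqF.
have s10 : 0 <= s1 by apply: sqrtr_ge0.
pose be := Num.sqrt ((Gb * (p * s1 ^+ 2) + a * Gb) / p).
have beE : p * be ^+ 2 = Gb * (p * s1 ^+ 2) + a * Gb.
  rewrite sqr_sqrtr; first by rewrite mulrC divfK // gt_eqF.
  rewrite divr_ge0 ?(ltW p0) // addr_ge0 // mulr_ge0 ?(ltW Gb0) ?(ltW a0) //.
  by rewrite mulr_ge0 ?(ltW p0) ?sqr_ge0.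
have be0 : 0 <= be by apply: sqrtr_ge0.
pose R0 := Gb * (A * s1) ^+ 2 + a * Gb.
have R00 : 0 <= R0 by rewrite addr_ge0 // mulr_ge0 ?(ltW Gb0) ?(ltW a0) ?sqr_ge0.
pose la := (R0 + 1) / (A ^+ 2 + B ^+ 2).
have la0 : 0 <= la by rewrite divr_ge0 ?(ltW AB0) // addr_ge0.
have laE : la * (A ^+ 2 + B ^+ 2) = R0 + 1 by rewrite divfK // gt_eqF.
pose b1 := be + la * A.
pose b2 := la * B.
have F0 : feasR p A B a Gs Gb s1 0 b1 b2.
  split.
  - by rewrite s1E.
  - rewrite -beE; apply: ler_wpM2l; first exact: ltW.
    have hb1 : be <= b1 by rewrite /b1 lerDl mulr_ge0.
    by rewrite ler_sqr ?nnegrE // (le_trans be0 hb1).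
  - have -> : A * b1 + B * b2 = A * be + (R0 + 1).
      by rewrite -laE /b1 /b2; ring.
    rewrite mulr0 subr0 -/R0.
    have h : 0 <= A * be by rewrite mulr_ge0.
    nra.
pose vec (s1 s2 b1 b2 : R) : 'rV[R]_4 := \row_(i < 4) [:: s1; s2; b1; b2]`_i.
have vecE t1 t2 d1 d2 : let x := vec t1 t2 d1 d2 in
    [/\ x ord0 i0 = t1, x ord0 i1 = t2, x ord0 i2 = d1 & x ord0 i3 = d2].
  by rewrite /= !mxE.
pose F := objR s1 0 b1 b2.
pose K := [set x : 'rV[R]_4 | feasR p A B a Gs Gb (x ord0 i0) (x ord0 i1) (x ord0 i2) (x ord0 i3)
   /\ objR (x ord0 i0) (x ord0 i1) (x ord0 i2) (x ord0 i3) <= F].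
have KF t1 t2 d1 d2 : feasR p A B a Gs Gb t1 t2 d1 d2 -> objR t1 t2 d1 d2 <= F ->
    K (vec t1 t2 d1 d2).
  by move=> h1 h2; rewrite /K /=; case: (vecE t1 t2 d1 d2) => -> -> -> ->.
have K0 : K !=set0 by exists (vec s1 0 b1 b2); apply: KF.
have Kc : compact K.
  pose M := F + 1.
  apply: (@subclosed_compact _ _ [set v : 'rV[R]_4 | forall i, `[- M, M]%classic (v ord0 i)]).
  - pose g1 (x : 'rV[R]_4) : R := p * x ord0 i0 ^+ 2 - a * Gs.
    pose g2 (x : 'rV[R]_4) : R := p * x ord0 i2 ^+ 2 - (Gb * (p * x ord0 i0 ^+ 2) + a * Gb).
    pose g3 (x : 'rV[R]_4) : R := (A * x ord0 i2 + B * x ord0 i3) ^+ 2 -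
                   (Gb * (A * x ord0 i0 - B * x ord0 i1) ^+ 2 + a * Gb).
    pose g4 (x : 'rV[R]_4) : R := F - objR (x ord0 i0) (x ord0 i1) (x ord0 i2) (x ord0 i3).
    have -> : K = g1 @^-1` [set y | 0 <= y] `&` g2 @^-1` [set y | 0 <= y]
               `&` g3 @^-1` [set y | 0 <= y] `&` g4 @^-1` [set y | 0 <= y].
      apply/seteqP; split => x /=.
        by case=> -[h1 h2 h3] h4; rewrite /g1 /g2 /g3 /g4 !subr_ge0.
      by rewrite /g1 /g2 /g3 /g4 !subr_ge0 => -[[[h1 h2] h3] h4].
    have cl g : ctn g -> closed (g @^-1` [set y : R | 0 <= y]).
      by move=> cg; apply: preimage_closed; [move=> x _; exact: cg | exact: closed_ge].
    have c1 : closed (g1 @^-1` [set y : R | 0 <= y]) by apply: cl; rewrite /g1; cont.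
    have c2 : closed (g2 @^-1` [set y : R | 0 <= y]) by apply: cl; rewrite /g2; cont.
    have c3 : closed (g3 @^-1` [set y : R | 0 <= y]) by apply: cl; rewrite /g3; cont.
    have c4 : closed (g4 @^-1` [set y : R | 0 <= y]) by apply: cl; rewrite /g4 /objR; cont.
    by apply: closedI => //; apply: closedI => //; apply: closedI.
  - by apply: (@rV_compact _ _ (fun=> `[- M, M]%classic)) => i; exact: segment_compact.
  - move=> x [_ hx]; rewrite /objR in hx.
    have F00 : 0 <= F by rewrite /F /objR; rewrite !addr_ge0 ?sqr_ge0.
    move=> [[|[|[|[|m]]]] Hi] //=; rewrite in_itv /=.
    + have -> : Ordinal Hi = i0 by apply: val_inj.
      have h1 := sqr_ge0 (x ord0 i1); have h2 := sqr_ge0 (x ord0 i2); have h3 := sqr_ge0 (x ord0 i3).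
      apply/andP; rewrite /M; split; nra.
    + have -> : Ordinal Hi = i1 by apply: val_inj.
      have h1 := sqr_ge0 (x ord0 i0); have h2 := sqr_ge0 (x ord0 i2); have h3 := sqr_ge0 (x ord0 i3).
      apply/andP; rewrite /M; split; nra.
    + have -> : Ordinal Hi = i2 by apply: val_inj.
      have h1 := sqr_ge0 (x ord0 i1); have h2 := sqr_ge0 (x ord0 i0); have h3 := sqr_ge0 (x ord0 i3).
      apply/andP; rewrite /M; split; nra.
    + have -> : Ordinal Hi = i3 by apply: val_inj.
      have h1 := sqr_ge0 (x ord0 i1); have h2 := sqr_ge0 (x ord0 i2); have h3 := sqr_ge0 (x ord0 i0).
      apply/andP; rewrite /M; split; nra.
have objc : continuous (fun x : 'rV[R]_4 => objR (x ord0 i0) (x ord0 i1) (x ord0 i2) (x ord0 i3)).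
  by have : ctn (fun x : 'rV[R]_4 => objR (x ord0 i0) (x ord0 i1) (x ord0 i2) (x ord0 i3))
    by rewrite /objR; cont.
have [c cK cmin] := EVT_min_rV K0 Kc (continuous_subspaceT objc).
move: cK; rewrite inE => -[cf cF].
exists (c ord0 i0), (c ord0 i1), (c ord0 i2), (c ord0 i3); split => // t1 t2 d1 d2 ht.
have [hle|hlt] := leP (objR t1 t2 d1 d2) F.
  have := cmin (vec t1 t2 d1 d2); rewrite inE => /(_ (KF _ _ _ _ ht hle)).
  by case: (vecE t1 t2 d1 d2) => -> -> -> ->.
by apply: le_trans cF (ltW hlt).
Qed.
End RealOpt.
End RealPart.
Import RealPart.

Section Gen.
Context {C : numClosedFieldType}.
Context {n : nat}.
Implicit Types (x y z e w : 'cV[C]_n) (W : 'M[C]_n).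

Lemma ctrmxK p q (A : 'M[C]_(p, q)) : ctrmx (ctrmx A) = A.
Proof. by apply/matrixP => i j; rewrite !mxE conjCK. Qed.
Lemma ctrmxM p q r (A : 'M[C]_(p, q)) (B : 'M[C]_(q, r)) :
  ctrmx (A *m B) = ctrmx B *m ctrmx A.
Proof. by rewrite /ctrmx map_mxM trmx_mul. Qed.
Lemma ctrmxD p q (A B : 'M[C]_(p, q)) : ctrmx (A + B) = ctrmx A + ctrmx B.
Proof. by apply/matrixP => i j; rewrite !mxE rmorphD. Qed.
Lemma ctrmxN p q (A : 'M[C]_(p, q)) : ctrmx (- A) = - ctrmx A.
Proof. by apply/matrixP => i j; rewrite !mxE rmorphN. Qed.
Lemma ctrmxZ p q k (A : 'M[C]_(p, q)) : ctrmx (k *: A) = k^* *: ctrmx A.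
Proof. by apply/matrixP => i j; rewrite !mxE rmorphM. Qed.
Lemma ctrmx0 p q : ctrmx (0 : 'M[C]_(p, q)) = 0.
Proof. by apply/matrixP => i j; rewrite !mxE rmorph0. Qed.
Definition ip x y : C := (ctrmx x *m y) 0 0.
Definition form W x y : C := (ctrmx x *m W *m y) 0 0.

Lemma ipE x y : ip x y = \sum_i (x i 0)^* * y i 0.
Proof. by rewrite /ip !mxE; apply: eq_bigr => i _; rewrite !mxE. Qed.

Lemma ip_ge0 x : 0 <= ip x x.
Proof. by rewrite ipE sumr_ge0 // => i _; rewrite mulrC mul_conjC_ge0. Qed.

Lemma ip_eq0 x : ip x x = 0 -> x = 0.
Proof.
rewrite ipE => /eqP; rewrite psumr_eq0 => [/allP h|i _]; last by rewrite mulrC mul_conjC_ge0.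
apply/matrixP => i j; rewrite (ord1 j) mxE.
have := h i (mem_index_enum i); rewrite mulrC mul_conjC_eq0 => /eqP ->.
by [].
Qed.

Lemma ipC x y : ip y x = (ip x y)^*.
Proof. by rewrite !ipE rmorph_sum; apply: eq_bigr => i _; rewrite rmorphM /= conjCK mulrC. Qed.

Lemma ipDr x y z : ip x (y + z) = ip x y + ip x z.
Proof. by rewrite /ip mulmxDr mxE. Qed.
Lemma ipDl x y z : ip (x + y) z = ip x z + ip y z.
Proof. by rewrite /ip ctrmxD mulmxDl mxE. Qed.
Lemma ipZr x y k : ip x (k *: y) = k * ip x y.
Proof. by rewrite /ip -scalemxAr mxE. Qed.
Lemma ipZl x y k : ip (k *: x) y = k^* * ip x y.
Proof. by rewrite /ip ctrmxZ -scalemxAl mxE. Qed.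
Lemma ipNr x y : ip x (- y) = - ip x y.
Proof. by rewrite -scaleN1r ipZr mulN1r. Qed.
Lemma ipNl x y : ip (- x) y = - ip x y.
Proof. by rewrite -scaleN1r ipZl rmorphN1 mulN1r. Qed.
Lemma ip0r x : ip x 0 = 0.
Proof. by rewrite /ip mulmx0 mxE. Qed.
Lemma ip0l x : ip 0 x = 0.
Proof. by rewrite /ip ctrmx0 mul0mx mxE. Qed.

Lemma formDr W x y z : form W x (y + z) = form W x y + form W x z.
Proof. by rewrite /form mulmxDr mxE. Qed.
Lemma formDl W x y z : form W (x + y) z = form W x z + form W y z.
Proof. by rewrite /form ctrmxD !mulmxDl mxE. Qed.
Lemma formZr W x y k : form W x (k *: y) = k * form W x y.
Proof. by rewrite /form -scalemxAr mxE. Qed.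
Lemma formZl W x y k : form W (k *: x) y = k^* * form W x y.
Proof. by rewrite /form ctrmxZ -!scalemxAl mxE. Qed.

Lemma formC W x y : hermmx W -> form W y x = (form W x y)^*.
Proof.
move=> hW.
have h : ctrmx (ctrmx x *m W *m y) = ctrmx y *m W *m x.
  by rewrite !ctrmxM ctrmxK hW mulmxA.
by rewrite /form -h !mxE.
Qed.

Lemma mx11M p (A : 'M[C]_(1, p)) (B : 'M[C]_(p, 1)) (D : 'M[C]_(1, 1)) :
  (A *m B *m D) 0 0 = (A *m B) 0 0 * D 0 0.
Proof. by rewrite [X in X *m D]mx11_scalar mul_scalar_mx mxE. Qed.

Lemma form_rank1 w x y : form (w *m ctrmx w) x y = ip x w * ip w y.
Proof. by rewrite /form mulmxA -mulmxA mx11M. Qed.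

Lemma form_rank1x w x : form (w *m ctrmx w) x x = ip x w * (ip x w)^*.
Proof. by rewrite form_rank1 (ipC x w). Qed.

Lemma tr_H W u : \tr ((u *m ctrmx u) *m W) = form W u u.
Proof. by rewrite -mulmxA mxtrace_mulC trace_mx11. Qed.

Lemma tr_rank1 w : \tr (w *m ctrmx w) = ip w w.
Proof. by rewrite mxtrace_mulC trace_mx11. Qed.

Lemma psd_rank1 w : psdmx (w *m ctrmx w).
Proof.
split; first by rewrite /hermmx ctrmxM ctrmxK.
move=> x; have -> : (ctrmx x *m (w *m ctrmx w) *m x) 0 0 = form (w *m ctrmx w) x x by [].
by rewrite form_rank1x mul_conjC_ge0.
Qed.

Lemma psd_form W x : psdmx W -> 0 <= form W x x.
Proof. by case=> _ h; exact: h. Qed.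

Lemma form_expand W a b x y : hermmx W ->
  form W (a *: x + b *: y) (a *: x + b *: y) =
  a^* * a * form W x x + (a^* * b * form W x y + (a^* * b * form W x y)^*)
  + b^* * b * form W y y.
Proof.
move=> hW; rewrite !formDl !formDr !formZl !formZr (formC W x y hW).
rewrite !rmorphM /= conjCK.
ring.
Qed.

Lemma form_quad W x y t : hermmx W ->
  form W (x + t *: y) (x + t *: y) =
  form W x x + t * form W x y + t^* * (form W x y)^* + t^* * t * form W y y.
Proof.
move=> hW; rewrite !formDl !formDr !formZl !formZr (formC W x y hW).
by rewrite mulrA; ring.
Qed.

Lemma real_conj (b : C) : 0 <= b -> b^* = b.
Proof. exact: geC0_conj. Qed.

Lemma CS_pos W x y : psdmx W -> 0 < form W y y ->
  form W x y * (form W x y)^* <= form W x x * form W y y.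
Proof.
move=> hW hb; set a := form W x x; set b := form W y y; set c := form W x y.
have := @psd_form W (x + (- c^* / b) *: y) hW.
rewrite form_quad; last by case: hW.
rewrite -/a -/b -/c.
have bc : b^* = b by apply: real_conj; exact: ltW.
rewrite rmorphM rmorphN /= conjCK rmorphV /=; rewrite ?bc /=.
have -> : a + - c^* / b * c + - c / b * c^* + - c / b * (- c^* / b) * b = a - c * c^* / b.
  by field; rewrite gt_eqF.
  by rewrite subr_ge0 ler_pdivrMr.
by rewrite unitfE gt_eqF.
Qed.

Lemma CS W x y : psdmx W ->
  form W x y * (form W x y)^* <= form W x x * form W y y.
Proof.
move=> hW; have hH : hermmx W by case: hW.
have := psd_form _ y hW; rewrite le_eqVlt => /orP[/eqP b0|]; last exact: CS_pos.
have := psd_form _ x hW; rewrite le_eqVlt => /orP[/eqP a0|a0].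
  have := @psd_form W (x + (- (form W x y)^*) *: y) hW.
  rewrite form_quad // -a0 -b0 !mulr0 addr0 rmorphN /= conjCK add0r.
  rewrite !mulNr (mulrC _^* (form W x y)) -opprD oppr_ge0 => h.
  by rewrite -(ler_pM2l (ltr0n _ 2)) mulr0 mulr2n mulrDl mul1r.

have := CS_pos _ y x hW a0; rewrite (formC W x y hH) conjCK.
by rewrite mulrC [X in _ <= X]mulrC.
Qed.

Lemma ctrmx1 : ctrmx (1%:M : 'M[C]_n) = 1%:M.
Proof. by apply/matrixP => i j; rewrite !mxE rmorph_nat eq_sym. Qed.

Lemma tr_psd_ge0 W : psdmx W -> 0 <= \tr W.
Proof.
move=> hW; rewrite /mxtrace sumr_ge0 // => i _.
have := psd_form _ (delta_mx i 0) hW; rewrite /form.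
have -> : ctrmx (delta_mx i 0 : 'cV[C]_n) = delta_mx 0 i.
  by apply/matrixP => a b; rewrite !mxE rmorph_nat andbC.
by rewrite -rowE -colE !mxE.
Qed.

Lemma proj1 W e : psdmx W -> ip e e = 1 ->
  exists W', [/\ psdmx W', \tr W = form W e e + \tr W' &
    forall y, ip e y = 0 -> form W' y y = form W y y].
Proof.
move=> hW he.
pose Q := 1%:M - e *m ctrmx e.
have hQ : ctrmx Q = Q by rewrite /Q ctrmxD ctrmxN ctrmx1 ctrmxM ctrmxK.
have Qy y : ip e y = 0 -> Q *m y = y.
  move=> hy; rewrite /Q mulmxBl mul1mx -mulmxA [ctrmx e *m y]mx11_scalar.
  by rewrite -/(ip e y) hy raddf0 mulmx0 subr0.
have QQ : Q *m Q = Q.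
  rewrite {1}/Q mulmxBl mul1mx -mulmxA.
  have -> : ctrmx e *m Q = 0.
    by rewrite /Q mulmxBr mulmx1 mulmxA [ctrmx e *m e]mx11_scalar -/(ip e e) he mul1mx subrr.
  by rewrite mulmx0 subr0.
exists (Q *m W *m Q); split.
- split.
    by rewrite /hermmx !ctrmxM hQ; case: hW => -> _; rewrite mulmxA.
  move=> x; have := psd_form _ (Q *m x) hW.
  by rewrite /form ctrmxM hQ !mulmxA.
- rewrite mxtrace_mulC mulmxA QQ.
  rewrite /Q mulmxBl mul1mx raddfB /= tr_H.
  by rewrite addrC subrK.
- move=> y hy; rewrite /form.
  have -> : ctrmx y *m (Q *m W *m Q) *m y = ctrmx (Q *m y) *m W *m (Q *m y).
    by rewrite ctrmxM hQ !mulmxA.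
  by rewrite Qy.
Qed.

Lemma trace2 W e1 e2 : psdmx W -> ip e1 e1 = 1 -> ip e1 e2 = 0 ->
  (e2 = 0 \/ ip e2 e2 = 1) -> form W e1 e1 + form W e2 e2 <= \tr W.
Proof.
move=> hW h1 h12 h2.
have [W' [hW' -> hf]] := proj1 _ _ hW h1.
rewrite lerD2l -hf //.
case: h2 => [->|h2].
  by rewrite /form ctrmx0 !mul0mx mxE tr_psd_ge0.
have [W'' [hW'' -> _]] := proj1 _ _ hW' h2.
by rewrite lerDl tr_psd_ge0.
Qed.
End Gen.

Section Main.
Context {R : realType}.
Local Notation C := R[i].
Local Notation "x %:C" := (real_complex R x) : ring_scope.

Lemma conjR (x : R) : (x%:C : C)^* = x%:C.
Proof. exact: conjc_real. Qed.
Lemma ge0_real {z : C} : 0 <= z -> z = (complex.Re z)%:C.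
Proof. by case: z => a b; rewrite lecE /= => /andP[/eqP -> _]. Qed.
Lemma mulzJ (z : C) : z * z^* = ((complex.Re z)^+2 + (complex.Im z)^+2)%:C.
Proof. case: z => a b; simpc; apply/eqP; rewrite eq_complex /=; apply/andP; split; apply/eqP; ring. Qed.
Lemma addzJ (z : C) : z + z^* = (2 * complex.Re z)%:C.
Proof. case: z => a b; simpc; apply/eqP; rewrite eq_complex /=; apply/andP; split; apply/eqP; ring. Qed.

Lemma rank1 n (w : 'cV[C]_n) : w != 0 -> \rank (w *m ctrmx w) = 1%N.
Proof.
move=> w0; apply/eqP; rewrite eqn_leq; apply/andP; split.
  exact: leq_trans (mxrankM_maxl _ _) (rank_leq_col _).
rewrite lt0n mxrank_eq0; apply/eqP => h.
have := tr_rank1 w; rewrite h mxtrace0 => /esym /ip_eq0 /eqP.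
by rewrite (negbTE w0).
Qed.

Lemma bnd_lo (A t1 t2 nf zr : R) : 0 <= nf -> - (A * (t1 * t2)) <= zr ->
  (A * t1 - nf * t2) ^+ 2 <= (A * t1) ^+ 2 + nf * (2 * zr) + nf ^+ 2 * t2 ^+ 2.
Proof.
move=> n0 hz; rewrite -subr_ge0.
have -> : (A * t1) ^+ 2 + nf * (2 * zr) + nf ^+ 2 * t2 ^+ 2 - (A * t1 - nf * t2) ^+ 2
   = 2 * (nf * (zr + A * (t1 * t2))) by ring.
by rewrite mulr_ge0 // mulr_ge0 // -lerBlDr sub0r.
Qed.
Lemma bnd_hi (A t1 t2 nf zr : R) : 0 <= nf -> zr <= A * (t1 * t2) ->
  (A * t1) ^+ 2 + nf * (2 * zr) + nf ^+ 2 * t2 ^+ 2 <= (A * t1 + nf * t2) ^+ 2.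
Proof.
move=> n0 hz; rewrite -subr_ge0.
have -> : (A * t1 + nf * t2) ^+ 2 - ((A * t1) ^+ 2 + nf * (2 * zr) + nf ^+ 2 * t2 ^+ 2)
   = 2 * (nf * (A * (t1 * t2) - zr)) by ring.
by rewrite mulr_ge0 // mulr_ge0 // subr_ge0.
Qed.
Lemma bnd_z (A t1 t2 zr zi : R) : 0 <= A -> 0 <= t1 -> 0 <= t2 ->
  zr ^+ 2 + zi ^+ 2 <= A ^+ 2 * (t1 ^+ 2 * t2 ^+ 2) ->
  - (A * (t1 * t2)) <= zr /\ zr <= A * (t1 * t2).
Proof.
move=> A0 h1 h2 h.
have h' : `|zr| ^+ 2 <= (A * (t1 * t2)) ^+ 2.
  rewrite real_normK ?num_real // !exprMn; apply: le_trans h; by rewrite lerDl sqr_ge0.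
have : `|zr| <= A * (t1 * t2) by rewrite -ler_sqr ?nnegrE ?normr_ge0 ?mulr_ge0.
by rewrite ler_norml => /andP[].
Qed.

Context {N : nat}.
Variables hs hb : 'cV[C]_N.
Hypothesis hs0 : hs != 0.
Hypothesis hb0 : hb != 0.

Definition pp := complex.Re (ip hs hs).
Lemma ppE : ip hs hs = pp%:C.
Proof. by apply: ge0_real; exact: ip_ge0. Qed.
Lemma pp_gt0 : 0 < pp.
Proof.
have h : ip hs hs != 0 by apply/eqP => /ip_eq0 /eqP; rewrite (negbTE hs0).
have := ip_ge0 hs; rewrite ppE ler0c => h2; rewrite lt_neqAle h2 andbT.
by apply: contra h; rewrite ppE => /eqP <-.
Qed.
Definition sp := Num.sqrt pp.
Lemma sp_gt0 : 0 < sp. Proof. by rewrite sqrtr_gt0 pp_gt0. Qed.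
Lemma sp2 : sp ^+ 2 = pp. Proof. by rewrite sqr_sqrtr // ltW // pp_gt0. Qed.
Definition e1 := (sp^-1)%:C *: hs.
Lemma e1n : ip e1 e1 = 1.
Proof.
rewrite /e1 ipZl ipZr conjR ppE -!rmorphM.
have -> : sp^-1 * (sp^-1 * pp) = 1.
  by rewrite -sp2; field; rewrite gt_eqF // sp_gt0.
by rewrite rmorph1.
Qed.
Lemma hsE : hs = sp%:C *: e1.
Proof. by rewrite /e1 scalerA -rmorphM mulfV ?gt_eqF ?sp_gt0 // rmorph1 scale1r. Qed.
Definition cc := ip e1 hb.
Definition ff := hb - cc *: e1.
Lemma e1f : ip e1 ff = 0.
Proof. by rewrite /ff ipDr ipNr ipZr e1n mulr1 subrr. Qed.
Definition nf := Num.sqrt (complex.Re (ip ff ff)).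
Lemma nf_ge0 : 0 <= nf. Proof. exact: sqrtr_ge0. Qed.
Lemma ffE : ip ff ff = (nf ^+ 2)%:C.
Proof.
have h := ge0_real (ip_ge0 ff).
rewrite sqr_sqrtr //; have := ip_ge0 ff; by rewrite h ler0c.
Qed.
Definition e2 := (nf^-1)%:C *: ff.
Lemma ffE2 : ff = nf%:C *: e2.
Proof.
case: (eqVneq nf 0) => h.
  have : ip ff ff = 0 by rewrite ffE h expr2 mul0r rmorph0.
  by move/ip_eq0 ->; rewrite h rmorph0 scale0r.
by rewrite /e2 scalerA -rmorphM mulfV // rmorph1 scale1r.
Qed.
Lemma e2cases : (nf = 0 /\ e2 = 0) \/ ip e2 e2 = 1.
Proof.
case: (eqVneq nf 0) => h.
  by left; split => //; rewrite /e2 h invr0 rmorph0 scale0r.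
right; rewrite /e2 ipZl ipZr conjR ffE -!rmorphM.
have -> : nf^-1 * (nf^-1 * nf ^+ 2) = 1 by field.
by rewrite rmorph1.
Qed.
Lemma e2cases' : e2 = 0 \/ ip e2 e2 = 1.
Proof. by case: e2cases => [[_ ->]|->]; [left|right]. Qed.
Lemma e12 : ip e1 e2 = 0. Proof. by rewrite /e2 ipZr e1f mulr0. Qed.
Lemma e21 : ip e2 e1 = 0. Proof. by rewrite ipC e12 rmorph0. Qed.
Lemma hbE : hb = cc *: e1 + nf%:C *: e2.
Proof. by rewrite -ffE2 /ff addrC subrK. Qed.
Definition AA := complex.Re `|cc|.
Lemma AAE : `|cc| = AA%:C. Proof. by apply: ge0_real; exact: normr_ge0. Qed.
Lemma AA_ge0 : 0 <= AA. Proof. by rewrite -ler0c -AAE normr_ge0. Qed.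
Lemma AB_gt0 : 0 < AA ^+ 2 + nf ^+ 2.
Proof.
rewrite lt_neqAle addr_ge0 ?sqr_ge0 // andbT; apply/negP => /eqP /esym /eqP.
rewrite paddr_eq0 ?sqr_ge0 // !sqrf_eq0 => /andP [/eqP a0 /eqP n0].
have c0 : cc = 0 by apply/eqP; rewrite -normr_eq0 AAE a0 rmorph0.
have : hb = 0 by rewrite hbE c0 n0 rmorph0 !scale0r addr0.
by move/eqP; rewrite (negbTE hb0).
Qed.
Definition om := if cc == 0 then 1 else cc^* / `|cc|.
Lemma ccJ : cc^* = om * AA%:C.
Proof.
rewrite /om -AAE; case: eqP => [->|h]; first by rewrite rmorph0 normr0 mulr0.
by rewrite divfK // normr_eq0; apply/eqP.
Qed.
Lemma omJ : om * om^* = 1.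
Proof.
rewrite /om; case: eqP => [_|h]; first by rewrite rmorph1 mulr1.
have hn : `|cc| != 0 by rewrite normr_eq0; apply/eqP.
rewrite rmorphM rmorphV ?unitfE //= conjCK conj_normC.
rewrite mulrACA -invfM -expr2 normCKC mulfV //.
by rewrite mulf_neq0 // ?conjC_eq0; apply/eqP.
Qed.

Definition wv (r1 r2 : R) := r1%:C *: e1 + (r2%:C * om) *: e2.
Lemma ip_e1w r1 r2 : ip e1 (wv r1 r2) = r1%:C.
Proof. by rewrite /wv ipDr (ipZr e1 e1) (ipZr e1 e2) e1n e12 mulr1 mulr0 addr0. Qed.
Lemma ip_e2w r1 r2 : ip e2 (wv r1 r2) = r2%:C * om * ip e2 e2.
Proof. by rewrite /wv ipDr (ipZr e2 e1) (ipZr e2 e2) e21 mulr0 add0r. Qed.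
Lemma ip_hsw r1 r2 : ip hs (wv r1 r2) = (sp * r1)%:C.
Proof. by rewrite {1}hsE (ipZl e1) conjR ip_e1w rmorphM. Qed.
Lemma ip_hbw r1 r2 : ip hb (wv r1 r2) = om * (AA * r1 + nf * r2)%:C.
Proof.
rewrite {1}hbE ipDl (ipZl e1) (ipZl e2) conjR ip_e1w ip_e2w ccJ.
case: e2cases => [[n0 _]|->].
  by rewrite n0 !rmorphD !rmorphM rmorph0 /=; ring.
by rewrite !rmorphD !rmorphM /=; ring.
Qed.
Lemma form_hs_w r1 r2 :
  form (wv r1 r2 *m ctrmx (wv r1 r2)) hs hs = (pp * r1 ^+ 2)%:C.
Proof. by rewrite form_rank1x ip_hsw conjR -rmorphM -sp2; congr (_%:C); ring. Qed.
Lemma form_hb_w r1 r2 :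
  form (wv r1 r2 *m ctrmx (wv r1 r2)) hb hb = ((AA * r1 + nf * r2) ^+ 2)%:C.
Proof. by rewrite form_rank1x ip_hbw rmorphM /= conjR mulrACA omJ mul1r -rmorphM expr2. Qed.
Lemma tr_w r1 r2 : \tr (wv r1 r2 *m ctrmx (wv r1 r2)) <= (r1 ^+ 2 + r2 ^+ 2)%:C.
Proof.
rewrite tr_rank1 {1}/wv ipDl (ipZl e1) (ipZl e2) ip_e1w ip_e2w conjR rmorphM /= conjR.
case: e2cases => [[_ ->]|->].
  rewrite ip0l !mulr0 addr0 -rmorphM lecR.
  by rewrite expr2 lerDl sqr_ge0.
have -> : r1%:C * r1%:C + r2%:C * om^* * (r2%:C * om * 1) =
          r1%:C * r1%:C + r2%:C * r2%:C * (om * om^*) by ring.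
by rewrite omJ mulr1 -!rmorphM -rmorphD !expr2.
Qed.

Lemma Vbound V : psdmx V ->
  let t1 := Num.sqrt (complex.Re (form V e1 e1)) in
  let t2 := Num.sqrt (complex.Re (form V e2 e2)) in
  [/\ form V hs hs = (pp * t1 ^+ 2)%:C,
      ((AA * t1 - nf * t2) ^+ 2)%:C <= form V hb hb,
      form V hb hb <= ((AA * t1 + nf * t2) ^+ 2)%:C &
      (t1 ^+ 2 + t2 ^+ 2)%:C <= \tr V].
Proof.
move=> hV t1 t2; have hH : hermmx V by case: hV.
have m11E : form V e1 e1 = (t1 ^+ 2)%:C.
  have h := ge0_real (psd_form _ e1 hV).
  rewrite sqr_sqrtr //; have := psd_form _ e1 hV; by rewrite h ler0c.
have m22E : form V e2 e2 = (t2 ^+ 2)%:C.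
  have h := ge0_real (psd_form _ e2 hV).
  rewrite sqr_sqrtr //; have := psd_form _ e2 hV; by rewrite h ler0c.
have t10 : 0 <= t1 by apply: sqrtr_ge0.
have t20 : 0 <= t2 by apply: sqrtr_ge0.
clearbody t1 t2.
have m11E' : form V e1 e1 = t1%:C ^+ 2 by rewrite m11E rmorphXn.
have m22E' : form V e2 e2 = t2%:C ^+ 2 by rewrite m22E rmorphXn.
set m12 := form V e1 e2.
pose z := cc^* * m12.
set r := 2 * complex.Re z.
have zz : z + z^* = r%:C by rewrite /r addzJ.
have zr : r = 2 * complex.Re z by [].
clearbody r.
have cE : cc^* * cc = AA%:C ^+ 2 by rewrite -normCKC AAE.
have EQc : (AA ^+ 2 * t1 ^+ 2 + nf * r + nf * nf * t2 ^+ 2)%:C =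
    AA%:C ^+ 2 * t1%:C ^+ 2 + nf%:C * r%:C + nf%:C * nf%:C * t2%:C ^+ 2.
  rewrite !rmorphD (rmorphM _ (AA ^+ 2)) (rmorphM _ nf r) (rmorphM _ (nf * nf)).
  by rewrite (rmorphM _ nf nf) !rmorphXn.
have EQ : form V hb hb = (AA ^+ 2 * t1 ^+ 2 + nf * r + nf * nf * t2 ^+ 2)%:C.
  rewrite EQc {1 2}hbE form_expand // -/m12 m11E' m22E' cE conjR -zz.
  have dE : cc^* * nf%:C * m12 = nf%:C * z by rewrite /z mulrAC mulrC.
  rewrite dE rmorphM /= conjR -mulrDr.
  by [].
have CSz : (complex.Re z) ^+ 2 + (complex.Im z) ^+ 2 <= AA ^+ 2 * (t1 ^+ 2 * t2 ^+ 2).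
  rewrite -lecR -mulzJ /z rmorphM /= conjCK.
  have -> : cc^* * m12 * (cc * m12^*) = (cc^* * cc) * (m12 * m12^*) by ring.
  rewrite -normCKC AAE (rmorphM _ (AA ^+ 2)) rmorphXn.
  apply: ler_wpM2l; first by rewrite exprn_ge0 // ler0c AA_ge0.
  by rewrite rmorphM /= -m11E -m22E; apply: CS.
have [zl zu] := bnd_z AA t1 t2 (complex.Re z) (complex.Im z) AA_ge0 t10 t20 CSz.
have nf0 := nf_ge0.
split.
- rewrite {1 2}hsE (formZl V e1) (formZr V _ e1) conjR m11E -!rmorphM -sp2; congr (_%:C); ring.
- by rewrite EQ lecR zr -exprMn bnd_lo // -expr2.
- by rewrite EQ lecR zr -exprMn -expr2 bnd_hi.
- rewrite rmorphD /= -m11E -m22E; apply: trace2 => //; [exact: e1n | exact: e12 | exact: e2cases'].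
Qed.

End Main.

Theorem proposition1 (R : realType) (N : nat) (hN : (0 < N)%N)
  (hs hb : 'cV[R[i]]_N) (hs0 : hs != 0) (hb0 : hb != 0)
  (Nno Gs Gb : R) (HNno : 0 < Nno) (HGs : 0 < Gs) (HGb : 0 < Gb) :
  let Hs := hs *m ctrmx hs in
  let Hb := hb *m ctrmx hb in
  exists Ws Wb : 'M[R[i]]_N,
    sdp_optimal Hs Hb (real_complex R Nno) (real_complex R Gs) (real_complex R Gb) Ws Wb
    /\ \rank Ws = 1%N /\ \rank Wb = 1%N.
Proof.
move=> Hs Hb.
have [s1 [s2 [b1 [b2 [hf hopt]]]]] := @real_opt R (pp hs) (AA hs hb) (nf hs hb) Nno Gs Gb
  (pp_gt0 hs hs0) HNno HGs HGb (AA_ge0 hs hb) (nf_ge0 hs hb) (AB_gt0 hs hb hb0).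
pose ws := wv hs hb s1 (- s2).
pose wb := wv hs hb b1 b2.
have [h1 h2 h3] := hf.
have NG0 : 0 < Nno * Gs by rewrite mulr_gt0.
exists (ws *m ctrmx ws), (wb *m ctrmx wb); split; last split.
- split.
  + have pws := psd_rank1 ws; have pwb := psd_rank1 wb.
    have hws : hermmx (ws *m ctrmx ws) by case: pws.
    have hwb : hermmx (wb *m ctrmx wb) by case: pwb.
    have k1 : real_complex R Nno * real_complex R Gs <= \tr (Hs *m (ws *m ctrmx ws)).
      by rewrite /Hs tr_H (form_hs_w hs hb hs0) -rmorphM /= lecR.
    have k2 : real_complex R Gb * \tr (Hs *m (ws *m ctrmx ws)) + real_complex R Nno * real_complex R Gb
              <= \tr (Hs *m (wb *m ctrmx wb)).
      by rewrite /Hs !tr_H !(form_hs_w hs hb hs0) -!rmorphM -rmorphD /= lecR.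
    have k3 : real_complex R Gb * \tr (Hb *m (ws *m ctrmx ws)) + real_complex R Nno * real_complex R Gb
              <= \tr (Hb *m (wb *m ctrmx wb)).
      by rewrite /Hb !tr_H !(form_hb_w hs hb hs0) -!rmorphM -rmorphD /= lecR mulrN.
    exact: (And5 hws hwb k1 k2 (And3 k3 pws pwb)).
  + move=> Vs Vb [hVs hVb c1 c2 [c3 pVs pVb]].
    have [v1 v2 v3 v4] := Vbound hs hb hs0 Vs pVs.
    have [u1 u2 u3 u4] := Vbound hs hb hs0 Vb pVb.
    move: v1 v2 v3 v4 u1 u2 u3 u4.
    set t1 := Num.sqrt _; set t2 := Num.sqrt _; set d1 := Num.sqrt _; set d2 := Num.sqrt _.
    clearbody t1 t2 d1 d2 => v1 v2 v3 v4 u1 u2 u3 u4.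
    rewrite /Hs /Hb !tr_H in c1 c2 c3.
    have ft : feasR R (pp hs) (AA hs hb) (nf hs hb) Nno Gs Gb t1 t2 d1 d2.
      split.
      * by move: c1; rewrite v1 -rmorphM lecR.
      * by move: c2; rewrite v1 u1 -!rmorphM -rmorphD lecR.
      * rewrite -lecR rmorphD (rmorphM _ Gb) (rmorphM _ Nno).
        apply: le_trans u3; apply: le_trans c3.
        by rewrite lerD2r ler_wpM2l // ler0c ltW.
    have hobj := hopt _ _ _ _ ft.
    apply: le_trans (lerD (tr_w hs hb hs0 s1 (- s2)) (tr_w hs hb hs0 b1 b2)) _.
    apply: le_trans (lerD v4 u4).
    by rewrite -!rmorphD lecR sqrrN !addrA.
- apply: rank1; apply/eqP => h0.
  have := ip_hsw hs hb hs0 s1 (- s2); rewrite -/ws h0 ip0r => /(congr1 (@complex.Re R)) /= /esym /eqP.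
  rewrite mulf_eq0 (gt_eqF (sp_gt0 hs hs0)) /= => /eqP s10.
  have e : pp hs * 0 ^+ 2 = 0 by rewrite expr2 !mulr0.
  by move: h1; rewrite s10 e leNgt NG0.
- apply: rank1; apply/eqP => h0.
  have := ip_hsw hs hb hs0 b1 b2; rewrite -/wb h0 ip0r => /(congr1 (@complex.Re R)) /= /esym /eqP.
  rewrite mulf_eq0 (gt_eqF (sp_gt0 hs hs0)) /= => /eqP b10.
  have e : pp hs * 0 ^+ 2 = 0 by rewrite expr2 !mulr0.
  have hb' : 0 < Nno * Gb by rewrite mulr_gt0.
  have ha : 0 <= Gb * (pp hs * s1 ^+ 2).
    apply: mulr_ge0; first exact: ltW.
    by apply: mulr_ge0; [exact: ltW (pp_gt0 hs hs0) | exact: sqr_ge0].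
  move: h2; rewrite b10 e => h.
  have := ltr_wpDl ha hb'; rewrite ltNge h //.
Qed.
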